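(* For all positive integers $n,t$ and $q\ge2$, the Hamming graph $H(tn,q)$ covers the multigraph $tH(n,q)$.
   Context: The Hamming graph $H(n,q)$ has vertex set $\mathbb{Z}_q^n$, two vertices adjacent iff they differ in exactly one coordinate. For a multigraph $G$ and positive integer $t$, $tG$ denotes the multigraph in which every edge and loop of $G$ has multiplicity $t$ times its multiplicity in $G$. A multigraph $G=(V,E)$ covers a multigraph $H=(U,W)$ if there is a surjective map $\varphi:V\to U$ such that for every $v\in V$ the multiset $\{\varphi(u): (u,v)\in E\}$ equals the multiset of neighbours of $\varphi(v)$ in $H$ (with multiplicities). *)

(* Defs.v *)
From mathcomp Require Import all_boot.
Set Implicit Arguments. Unset Strict Implicit. Unset Printing Implicit Defensive.

(* A (finite, undirected) multigraph on a finite vertex type V is given by its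
   multiplicity function: [m x y] = number of edges between x and y
   ([m x x] = number of loops at x). *)
Definition multigraph (V : finType) := V -> V -> nat.

Definition symmetric_mg (V : finType) (m : multigraph V) : Prop :=
  forall x y, m x y = m y x.

(* Vertex set Z_q^n represented as functions 'I_n -> 'I_q. *)
Definition hvert (n q : nat) : finType := {ffun 'I_n -> 'I_q}.

Definition hamming (n q : nat) : multigraph (hvert n q) :=
  fun x y => nat_of_bool (#|[set i | x i != y i]| == 1).

Definition scale_mg (V : finType) (t : nat) (m : multigraph V) : multigraph V :=
  fun x y => t * m x y.

(* G covers H: a surjection phi : V -> U such that for every v, the multiset
   {phi u : u neighbour of v in G} equals the neighbour multiset of phi v in H,
   i.e. for every w in U, the number of G-edges from v to vertices mapped to w
   equals the H-multiplicity between phi v and w. *)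
Definition covers (V U : finType) (mG : multigraph V) (mH : multigraph U) : Prop :=
  exists phi : V -> U,
    (forall w : U, exists v : V, phi v = w) /\
    (forall (v : V) (w : U), \sum_(u : V | phi u == w) mG v u = mH (phi v) w).

Arguments hamming : clear implicits.
Arguments scale_mg {V} t m _ _.

(* Main.v *)
Require Import Defs.
From mathcomp Require Import all_boot.
From mathcomp Require Import all_algebra.

Section Helpers.
Import GRing.Theory.
Local Open Scope ring_scope.

Variables (t n' q' : nat).
Local Notation N := n'.+1.
Local Notation Q := q'.+2.
Local Notation V := {ffun 'I_(t * N) -> 'I_Q}.
Local Notation U := {ffun 'I_N -> 'I_Q}.

Definition kn (k : 'I_(t * N)) : 'I_N := inord (k %% N).
Lemma knE k : (kn k : nat) = (k %% N)%N.
Proof. by rewrite /kn inordK // ltn_pmod. Qed.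

Definition phi (x : V) : U := [ffun i => \sum_(k | kn k == i) x k].

Lemma phi_upd (v u : V) k : (forall j, j != k -> u j = v j) ->
  forall i, phi u i = phi v i + (if kn k == i then u k - v k else 0).
Proof.
move=> H i; rewrite !ffunE.
have -> : \sum_(j | kn j == i) u j =
          \sum_(j | kn j == i) (v j + (if j == k then u k - v k else 0)).
  apply: eq_bigr => j _; case: eqP => [->|/eqP ne].
    by rewrite addrC subrK.
  by rewrite addr0 H.
rewrite big_split /=; congr (_ + _).
case: (boolP (kn k == i)) => h.
  rewrite (bigD1 k) //= eqxx big1 ?addr0 // => j /andP[_ /negPf->] //.
rewrite big1 // => j ji; case: eqP => // ejk; subst j.
by rewrite ji in h.
Qed.
Arguments phi_upd {v u k}.

Lemma diff1 (v u : V) k : [set j | v j != u j] == [set k] ->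
  (forall j, j != k -> u j = v j) /\ u k != v k.
Proof.
move/eqP/setP => H; split.
  move=> j jk; move: (H j); rewrite !inE (negPf jk) => /negbT.
  by rewrite negbK => /eqP ->.
by move: (H k); rewrite !inE eqxx eq_sym.
Qed.
Arguments diff1 {v u k}.

Lemma neq_add (x d : 'I_Q) : (x != x + d) = (d != 0).
Proof.
congr negb; apply/eqP/eqP => [h|->]; last by rewrite addr0.
by have := congr1 (fun y => y - x) h; rewrite subrr addrC addKr.
Qed.

Lemma count_k (v : V) (w : U) k :
  (\sum_(u | phi u == w) ([set j | v j != u j] == [set k] : nat))%N =
  ([set i | phi v i != w i] == [set kn k] : nat).
Proof.
case: (boolP ([set i | phi v i != w i] == [set kn k])) => hd /=.
  set d := w (kn k) - phi v (kn k).
  have dn0 : d != 0.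
    move/eqP/setP: hd => /(_ (kn k)); rewrite !inE eqxx => hh.
    by rewrite /d subr_eq0 eq_sym hh.
  have hoth : forall i, i != kn k -> phi v i = w i.
    move=> i ik; move/eqP/setP: hd => /(_ i); rewrite !inE (negPf ik).
    by move/negbT; rewrite negbK => /eqP.
  pose u0 : V := [ffun j => if j == k then v k + d else v j].
  have u0oth : forall j, j != k -> u0 j = v j.
    by move=> j jk; rewrite ffunE (negPf jk).
  have phiu0 : phi u0 == w.
    have u0k : u0 k - v k = d by rewrite ffunE eqxx addrC addKr.
    apply/eqP/ffunP => i; rewrite (phi_upd u0oth) u0k.
    case: eqP => [<-|/eqP ik]; first by rewrite /d addrC subrK.
    by rewrite addr0 hoth // eq_sym.
  have du0 : [set j | v j != u0 j] == [set k].
    apply/eqP/setP => j; rewrite !inE ffunE.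
    case: (j =P k) => [->|/eqP jk]; rewrite ?eqxx ?(negPf jk); first by rewrite neq_add.
    by rewrite ?eqxx.
  rewrite (bigD1 u0) //= du0 big1 // => u /andP[/eqP pu nu].
  case: (boolP ([set j | v j != u j] == [set k])) => //= hu.
  case: (diff1 hu) => hoth' _.
  have := phi_upd hoth' (kn k); rewrite eqxx pu => hk.
  case/negP: nu; apply/eqP/ffunP => j; rewrite ffunE.
  case: eqP => [->|/eqP jk]; last by rewrite hoth'.
  by rewrite /d hk addrAC subrr add0r addrC subrK.
rewrite big1 // => u /eqP pu.
case: (boolP ([set j | v j != u j] == [set k])) => //= hu.
case: (diff1 hu) => hoth' nk.
case/negP: hd; apply/eqP/setP => i; rewrite !inE -pu (phi_upd hoth').
case: (kn k =P i) => [<-|/eqP ik]; first by rewrite eqxx neq_add subr_eq0 nk.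
by rewrite addr0 eqxx eq_sym (negPf ik).
Qed.

Lemma ham_sum (m : nat) (S : {set 'I_m}) :
  (#|S| == 1)%N = (\sum_(k < m) (S == [set k] : nat))%N :> nat.
Proof.
case: (boolP (#|S| == 1)%N) => h.
  move/cards1P: h => [k0 ->]; rewrite (bigD1 k0) //= eqxx big1 // => k /negPf nk.
  by rewrite (inj_eq set1_inj) eq_sym nk.
rewrite big1 // => k _; case: eqP => // hS; move: h; by rewrite hS cards1.
Qed.

End Helpers.

Lemma count_mod (n t i : nat) : 0 < n -> i < n ->
  \sum_(k < t * n) (k %% n == i) = t.
Proof.
move=> n0 ilt; rewrite -(big_mkord xpredT (fun k => nat_of_bool (k %% n == i))).
elim: t => [|t IH]; first by rewrite mul0n big_geq.
rewrite mulSn addnC (big_cat_nat _ (leq_addr _ _)) //= IH.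
rewrite -{1}(add0n (t * n)) big_addn addKn.
under eq_bigr => k _ do rewrite addnC modnMDl.
rewrite big_mkord (bigD1 (Ordinal ilt)) //= modn_small // eqxx.
rewrite big1 ?addn0 ?addn1 //.
move=> k nk; rewrite modn_small //; apply/eqP; rewrite eqb0.
apply/negP => /eqP ki.
by case/negP: nk; apply/eqP/val_inj.
Qed.

Theorem proposition6 (n t q : nat) :
  0 < n -> 0 < t -> 2 <= q ->
  covers (hamming (t * n) q) (scale_mg t (hamming n q)).
Proof.
case: n => [//|n'] _ tpos.
case: q => [//|[//|q']] _.
exists (@phi t n' q'); split.
  move=> w.
  have hlt : forall i : 'I_n'.+1, i < t * n'.+1.
    by move=> i; apply: leq_trans (ltn_ord i) (leq_pmull _ tpos).
  exists [ffun k : 'I_(t * n'.+1) => if k < n'.+1 then w (@kn t n' k) else 0%R].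
  apply/ffunP => i; rewrite ffunE (bigD1 (Ordinal (hlt i))) /=; last first.
    by rewrite -val_eqE /= knE modn_small //=; apply: ltn_ord.
  have ki : @kn t n' (Ordinal (hlt i)) = i.
    by apply/eqP; rewrite -val_eqE /= knE modn_small //=; apply: ltn_ord.
  rewrite ffunE /= ltn_ord ki big1 ?GRing.addr0 // => k /andP[/eqP kk nk].
  rewrite ffunE; case: ifP => // kl.
  case/negP: nk; apply/eqP/val_inj => /=.
  by rewrite -kk knE modn_small.
move=> v w; rewrite /scale_mg /hamming.
under eq_bigr => u _ do rewrite ham_sum.
rewrite exchange_big /=.
under eq_bigr => k _ do rewrite count_k.
case: (boolP (#|[set i | @phi t n' q' v i != w i]| == 1)) => h /=.
  move/cards1P: h => [i0 ->]; rewrite muln1.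
  rewrite -[RHS](@count_mod n'.+1 t i0 (ltn0Sn n') (ltn_ord i0)).
  apply: eq_bigr => k _; rewrite (inj_eq set1_inj) eq_sym.
  by rewrite -val_eqE /= knE.
rewrite muln0 big1 // => k _; case: eqP => // hS; move: h; by rewrite hS cards1.
Qed.
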